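(* Let $m\ge 2$ and let $W$ be a channel from $\{1,\dots,m\}$ to $\{1,2\}$. Then \[ \underline{C}_{10}(W)=C(W)\quad\text{and}\quad \overline{C}_{10}(W)=C\left(\begin{pmatrix}1&0\\ \underline{P}_W(1)&1-\underline{P}_W(1)\end{pmatrix}\right). \]
   Context: A channel from a finite set $\mathcal{A}$ to a finite set $\mathcal{B}$ is a row-stochastic matrix $(W_{a,b})$. For a probability distribution $\mu$ on the input set, $I(\mu,W)=\sum_x\mu_x D(W_{x,*}\|\mu W)$ (Kullback–Leibler divergence, base-2 logarithm), and $C(W)=\max_\mu I(\mu,W)$. Let $\mathcal{X}=\{1,\dots,m\}$, $\mathcal{Y}=\{1,\dots,n\}$ (here $n=2$). A deterministic channel is a 0-1 channel, identified with a map $D:\mathcal{X}\to\mathcal{Y}$; $\mathcal{D}$ is the set of all of them and $\mathrm{rank}(D)$ is the matrix rank. $\Lambda(W)=\{\lambda\text{ probability distribution on }\mathcal{D}: W=\sum_D\lambda_DD\}$. For $\lambda\in\Lambda(W)$, $C_{10}(\lambda)=\max_{\mu} I(\mu,V^\lambda)$, where $\mu$ ranges over probability distributions on the set $\mathcal{X}^{\mathcal{D}}$ of maps $u:\mathcal{D}\to\mathcal{X}$, and $V^\lambda$ is the channel from $\mathcal{X}^{\mathcal{D}}$ to $\mathcal{Y}$ with $V^\lambda_{u,y}=\sum_D\lambda_D D_{u(D),y}$. $\underline{C}_{10}(W)=\inf_{\lambda\in\Lambda(W)}C_{10}(\lambda)$, $\overline{C}_{10}(W)=\sup_{\lambda\in\Lambda(W)}C_{10}(\lambda)$.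 $\underline{P}_W(1)=\min_{\lambda\in\Lambda(W)}\lambda(\{D:\mathrm{rank}(D)=1\})$. *)

(* Defs.v *)
From HB Require Import structures.
From mathcomp Require Import all_boot all_order all_algebra.
From mathcomp Require Import all_classical all_reals all_analysis.
Set Implicit Arguments. Unset Strict Implicit. Unset Printing Implicit Defensive.
Import Order.TTheory GRing.Theory Num.Theory.
Local Open Scope classical_set_scope.
Local Open Scope ring_scope.

Section Channels.
Variable R : realType.

Definition is_channel (A B : finType) (W : A -> B -> R) : Prop :=
  (forall a b, 0 <= W a b) /\ (forall a, \sum_(b : B) W a b = 1).

Definition is_dist (A : finType) (mu : A -> R) : Prop :=
  (forall a, 0 <= mu a) /\ \sum_(a : A) mu a = 1.

Definition log2 (x : R) : R := ln x / ln 2.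

Definition outdist (A B : finType) (mu : A -> R) (W : A -> B -> R) (b : B) : R :=
  \sum_(a : A) mu a * W a b.

(* KL divergence (base 2), with the convention 0 log(0/q) = 0.  Only used
   inside I(mu,W) where p_b > 0 and mu_a > 0 force q_b > 0. *)
Definition KL (B : finType) (p q : B -> R) : R :=
  \sum_(b : B) (if p b == 0 then 0 else p b * log2 (p b / q b)).

Definition MI (A B : finType) (mu : A -> R) (W : A -> B -> R) : R :=
  \sum_(a : A) mu a * KL (W a) (outdist mu W).

(* capacity C(W) = max_mu I(mu,W) (the max is attained; stated as sup) *)
Definition capacity (A B : finType) (W : A -> B -> R) : R :=
  sup [set x | exists mu : A -> R, is_dist mu /\ x = MI mu W].

(* deterministic channels X -> Y identified with maps D : X -> Y *)
Definition detch (m n : nat) (D : {ffun 'I_m -> 'I_n}) (x : 'I_m) (y : 'I_n) : R :=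
  if D x == y then 1 else 0.

Definition detrank (m n : nat) (D : {ffun 'I_m -> 'I_n}) : nat :=
  \rank (\matrix_(i < m, j < n) detch D i j).

Definition Lambda (m n : nat) (W : 'I_m -> 'I_n -> R)
  (lam : {ffun 'I_m -> 'I_n} -> R) : Prop :=
  is_dist lam /\ forall x y, W x y = \sum_(D : {ffun 'I_m -> 'I_n}) lam D * detch D x y.

Definition Vlam (m n : nat) (lam : {ffun 'I_m -> 'I_n} -> R)
  (u : {ffun {ffun 'I_m -> 'I_n} -> 'I_m}) (y : 'I_n) : R :=
  \sum_(D : {ffun 'I_m -> 'I_n}) lam D * detch D (u D) y.

Definition C10 (m n : nat) (lam : {ffun 'I_m -> 'I_n} -> R) : R :=
  capacity (Vlam lam).

Definition lowC10 (m n : nat) (W : 'I_m -> 'I_n -> R) : R :=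
  inf [set x | exists lam, Lambda W lam /\ x = C10 lam].

Definition upC10 (m n : nat) (W : 'I_m -> 'I_n -> R) : R :=
  sup [set x | exists lam, Lambda W lam /\ x = C10 lam].

Definition lowP1 (m n : nat) (W : 'I_m -> 'I_n -> R) : R :=
  inf [set x | exists lam, Lambda W lam /\
        x = \sum_(D : {ffun 'I_m -> 'I_n} | detrank D == 1%N) lam D].

Definition zchan (p : R) : 'M[R]_(2, 2) :=
  \matrix_(i < 2, j < 2)
    (if i == 0 :> nat then (if j == 0 :> nat then 1 else 0)
     else (if j == 0 :> nat then p else 1 - p)).

End Channels.

(* Main.v *)
Require Import Defs.
From HB Require Import structures.
From mathcomp Require Import all_boot all_order all_algebra.
From mathcomp Require Import all_classical all_reals all_analysis.
From mathcomp Require Import ring lra.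
Set Implicit Arguments. Unset Strict Implicit. Unset Printing Implicit Defensive.
Import Order.TTheory GRing.Theory Num.Theory.
Local Open Scope ring_scope.


Section Basics.
Variable R : realType.

Definition phi (a b : R) : R := if a == 0 then 0 else a * ln (a / b).

Lemma ln_le_sub1 (x : R) : 0 < x -> ln x <= x - 1.
Proof.
move=> x0; have := expR_ge1Dx (ln x); rewrite lnK ?posrE //; lra.
Qed.

Lemma ln_ge1V (x : R) : 0 < x -> 1 - x^-1 <= ln x.
Proof.
move=> x0; have xi : 0 < x^-1 by rewrite invr_gt0.
have := ln_le_sub1 xi; rewrite lnV ?posrE //; lra.
Qed.

Lemma phi_core (a b A B : R) : 0 <= a -> 0 <= b -> (0 < a -> 0 < b) ->
  0 < A -> 0 < B -> a * ln (A / B) + a - b * (A / B) <= phi a b.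
Proof.
move=> a0 b0 ab A0 B0; rewrite /phi.
have AB0 : 0 < A / B by rewrite divr_gt0.
case: eqP => [->|/eqP an0].
  rewrite mul0r add0r subr_le0 mulr_ge0 //; exact: ltW.
have ap : 0 < a by rewrite lt_neqAle eq_sym an0 a0.
have bp := ab ap.
set r := (a / b) / (A / B).
have rp : 0 < r by rewrite /r !divr_gt0.
have e : ln (a / b) = ln (A / B) + ln r.
  rewrite -lnM ?posrE //; congr ln; rewrite /r [RHS]mulrC divfK //; exact: lt0r_neq0.
rewrite e mulrDr -addrA lerD2l.
have := ln_ge1V rp.
have -> : r^-1 = b / a * (A / B).
  rewrite /r; field.
  by rewrite !lt0r_neq0.
move=> h.
have : a * (1 - b / a * (A / B)) <= a * ln r by rewrite ler_wpM2l // ltW.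
have -> : a * (1 - b / a * (A / B)) = a - b * (A / B) by field; rewrite lt0r_neq0.
by [].
Qed.

Lemma phi0l (b : R) : phi 0 b = 0.
Proof. by rewrite /phi eqxx. Qed.

Lemma phiZ (c a b : R) : 0 <= c -> phi (c * a) (c * b) = c * phi a b.
Proof.
move=> c0; rewrite /phi; case: (eqVneq c 0) => [->|cn0].
  by rewrite !mul0r eqxx.
rewrite mulf_eq0 (negbTE cn0) /=; case: eqP => // _; first by rewrite mulr0.
rewrite -mulrA; congr (_ * (_ * ln _)).
by rewrite invfM mulrACA divff // mul1r.
Qed.

Lemma logsum (I : finType) (a b : I -> R) :
  (forall i, 0 <= a i) -> (forall i, 0 <= b i) -> (forall i, 0 < a i -> 0 < b i) ->
  phi (\sum_i a i) (\sum_i b i) <= \sum_i phi (a i) (b i).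
Proof.
move=> a0 b0 ab.
have A0 : 0 <= \sum_i a i by apply: sumr_ge0.
case: (eqVneq (\sum_i a i) 0) => [A00|An0].
  rewrite A00 phi0l; apply: sumr_ge0 => i _.
  have -> : a i = 0 by move: i isT; apply: (psumr_eq0P _ A00) => j _; exact: a0 j.
  by rewrite phi0l.
have Ap : 0 < \sum_i a i by rewrite lt_neqAle eq_sym An0.
have /existsP [i0 ai0] : [exists i, 0 < a i].
  apply: contraNT An0 => /existsPn hn; apply/eqP/big1 => i _.
  by apply/eqP; rewrite eq_le a0 andbT leNgt; apply: hn.
have Bp : 0 < \sum_i b i.
  apply: (lt_le_trans (ab _ ai0)); rewrite (bigD1 i0) //= lerDl; exact: sumr_ge0.
set A := \sum_i a i; set B := \sum_i b i.
apply: (le_trans _ (ler_sum _ (fun i _ => @phi_core (a i) (b i) A B (a0 i) (b0 i) (ab i) Ap Bp))).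
have -> : \sum_(i | true) (a i * ln (A / B) + a i - b i * (A / B)) =
   A * ln (A / B) + A - B * (A / B).
  by rewrite big_split big_split /= sumrN -!mulr_suml.
rewrite /phi (negbTE An0) mulrCA divff ?mulr1 ?addrK //; exact: lt0r_neq0 Bp.
Qed.

Lemma logsum2 (a1 a2 b1 b2 : R) : 0 <= a1 -> 0 <= a2 -> 0 <= b1 -> 0 <= b2 ->
  (0 < a1 -> 0 < b1) -> (0 < a2 -> 0 < b2) ->
  phi (a1 + a2) (b1 + b2) <= phi a1 b1 + phi a2 b2.
Proof.
move=> *.
have := @logsum bool (fun i => if i then a1 else a2) (fun i => if i then b1 else b2).
rewrite !big_bool /=; apply; case => //.
Qed.

End Basics.


Section MIsec.
Variable R : realType.

Definition MIn (A B : finType) (mu : A -> R) (W : A -> B -> R) : R :=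
  \sum_a \sum_b mu a * phi (W a b) (outdist mu W b).

Lemma ln2_gt0 : 0 < ln (2 : R).
Proof. by apply: ln_gt0; rewrite ltr1n. Qed.

Lemma MI_MIn (A B : finType) (mu : A -> R) (W : A -> B -> R) :
  MI mu W = MIn mu W / ln 2.
Proof.
rewrite /MI /MIn mulr_suml; apply: eq_bigr => a _.
rewrite /KL mulr_sumr mulr_suml; apply: eq_bigr => b _.
rewrite /phi /log2; case: eqP => _; first by rewrite !mulr0 mul0r.
by rewrite !mulrA.
Qed.

Lemma prod_pos (x y : R) : 0 <= x -> 0 <= y -> 0 < x * y -> 0 < x /\ 0 < y.
Proof.
move=> x0 y0 p.
have xn : x != 0 by apply: contraTneq p => ->; rewrite mul0r ltxx.
have yn : y != 0 by apply: contraTneq p => ->; rewrite mulr0 ltxx.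
by split; rewrite lt_neqAle eq_sym ?xn ?yn.
Qed.

Lemma outdist_ge (A B : finType) (mu : A -> R) (W : A -> B -> R) a b :
  (forall a, 0 <= mu a) -> (forall a b, 0 <= W a b) ->
  mu a * W a b <= outdist mu W b.
Proof.
move=> m0 W0; rewrite /outdist (bigD1 a) //= lerDl; apply: sumr_ge0 => i _.
exact: mulr_ge0.
Qed.

Lemma outdist_ge0 (A B : finType) (mu : A -> R) (W : A -> B -> R) b :
  (forall a, 0 <= mu a) -> (forall a b, 0 <= W a b) -> 0 <= outdist mu W b.
Proof. move=> m0 W0; apply: sumr_ge0 => i _; exact: mulr_ge0. Qed.

Lemma MIn_term_bound (A B : finType) (mu : A -> R) (W : A -> B -> R) a b :
  (forall a, 0 <= mu a) -> (forall a b, 0 <= W a b) -> mu a <= 1 ->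
  mu a * phi (W a b) (outdist mu W b) <= W a b.
Proof.
move=> m0 W0 m1; rewrite /phi; case: eqP => [->|/eqP wn0]; first by rewrite mulr0.
have wp : 0 < W a b by rewrite lt_neqAle eq_sym wn0 W0.
case: (eqVneq (mu a) 0) => [->|mn0]; first by rewrite mul0r; exact: ltW.
have mp : 0 < mu a by rewrite lt_neqAle eq_sym mn0 m0.
have qge := outdist_ge a b m0 W0.
set q := outdist mu W b in qge *.
have qp : 0 < q by apply: lt_le_trans qge; rewrite mulr_gt0.
have h1 := ln_le_sub1 (divr_gt0 wp qp).
apply: (@le_trans _ _ (mu a * (W a b * (W a b / q - 1)))).
  by rewrite ler_wpM2l // ler_wpM2l // ltW.
have h2 : W a b / q - 1 <= W a b / q by lra.
apply: (@le_trans _ _ (mu a * (W a b * (W a b / q)))).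
  by rewrite ler_wpM2l // ler_wpM2l // ltW.
have -> : mu a * (W a b * (W a b / q)) = W a b * ((mu a * W a b) / q) by field; exact: lt0r_neq0.
rewrite -[X in _ <= X]mulr1 ler_wpM2l ?(ltW wp) //.
by rewrite ler_pdivrMr // mul1r.
Qed.

Lemma MIn_bound (A B : finType) (mu : A -> R) (W : A -> B -> R) :
  is_channel W -> is_dist mu -> MIn mu W <= #|A|%:R.
Proof.
move=> [W0 W1] [m0 m1].
have mu1 : forall a, mu a <= 1.
  by move=> a; rewrite -m1 (bigD1 a) //= lerDl; apply: sumr_ge0.
apply: (@le_trans _ _ (\sum_(a : A) \sum_(b : B) W a b)).
  apply: ler_sum => a _; apply: ler_sum => b _; exact: MIn_term_bound.
rewrite (eq_bigr (fun _ => 1)) ?sumr_const // => a _.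
Qed.

Definition dirac (A : finType) (a0 : A) : A -> R := fun a => if a == a0 then 1 else 0.

Lemma dirac_dist (A : finType) (a0 : A) : is_dist (dirac a0).
Proof.
split; first by move=> a; rewrite /dirac; case: eqP.
by rewrite /dirac -big_mkcond /= big_pred1_eq.
Qed.

Lemma cap_ub (A B : finType) (mu : A -> R) (W : A -> B -> R) :
  is_channel W -> is_dist mu -> MI mu W <= capacity W.
Proof.
move=> hW hm; apply: ub_le_sup; last by exists mu.
exists (#|A|%:R / ln 2) => x [nu [hn ->]].
rewrite MI_MIn ler_pM2r ?invr_gt0 ?ln2_gt0 //; exact: MIn_bound.
Qed.

Lemma cap_le (A B : finType) (a0 : A) (W : A -> B -> R) (c : R) :
  (forall mu, is_dist mu -> MI mu W <= c) -> capacity W <= c.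
Proof.
move=> h; apply: ge_sup; first by exists (MI (dirac a0) W), (dirac a0); split => //; exact: dirac_dist.
by move=> x [mu [hm ->]]; apply: h.
Qed.

Lemma DP (A A' B : finType) (W : A -> B -> R) (V : A' -> B -> R) (T : A' -> A -> R) :
  is_channel W -> (forall u x, 0 <= T u x) -> (forall u, \sum_x T u x = 1) ->
  (forall u b, V u b = \sum_x T u x * W x b) ->
  forall mu, is_dist mu -> MIn mu V <= MIn (fun x => \sum_u mu u * T u x) W.
Proof.
move=> [W0 W1] T0 T1 VT mu [m0 m1].
set nu := fun x => \sum_u mu u * T u x.
have V0 : forall u b, 0 <= V u b.
  by move=> u b; rewrite VT; apply: sumr_ge0 => x _; exact: mulr_ge0.
have qe : forall b, outdist nu W b = outdist mu V b.
  move=> b; rewrite /outdist /nu.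
  under [RHS]eq_bigr => u _ do rewrite VT mulr_sumr.
  rewrite exchange_big /=; apply: eq_bigr => x _.
  by rewrite mulr_suml; apply: eq_bigr => u _; rewrite mulrA.
rewrite /MIn.
under [X in _ <= X]eq_bigr => x _ do under eq_bigr => b _ do rewrite qe /nu mulr_suml.
under [X in _ <= X]eq_bigr => x _ do rewrite exchange_big /=.
rewrite [X in _ <= X]exchange_big /=; apply: ler_sum => u _.
rewrite [X in _ <= X]exchange_big /=; apply: ler_sum => b _.
set q := outdist mu V b.
case: (eqVneq (mu u) 0) => [->|mn0].
  by rewrite mul0r; apply: sumr_ge0 => x _; rewrite !mul0r.
have mp : 0 < mu u by rewrite lt_neqAle eq_sym mn0 m0.
have q0 : 0 <= q by apply: outdist_ge0.
rewrite -phiZ ?m0 //.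
have -> : mu u * V u b = \sum_x (mu u * T u x) * W x b.
  by rewrite VT mulr_sumr; apply: eq_bigr => x _; rewrite mulrA.
have -> : mu u * q = \sum_x (mu u * T u x) * q.
  by rewrite -mulr_suml -mulr_sumr T1 mulr1.
apply: le_trans (logsum _ _ _) _.
- by move=> x; rewrite mulr_ge0 // mulr_ge0.
- by move=> x; rewrite mulr_ge0 // mulr_ge0.
- move=> x hp; have [hmt hw] := prod_pos (mulr_ge0 (m0 u) (T0 u x)) (W0 x b) hp.
  rewrite mulr_gt0 //; apply: lt_le_trans hp _.
  apply: (@le_trans _ _ (mu u * V u b)); last exact: outdist_ge.
  rewrite -mulrA ler_wpM2l // VT (bigD1 x) //= lerDl; apply: sumr_ge0 => i _.
  exact: mulr_ge0.
apply: ler_sum => x _; rewrite phiZ // mulr_ge0 //.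
Qed.

Lemma cap_DP (A A' B : finType) (a0 : A') (W : A -> B -> R) (V : A' -> B -> R) (T : A' -> A -> R) :
  is_channel W -> (forall u x, 0 <= T u x) -> (forall u, \sum_x T u x = 1) ->
  (forall u b, V u b = \sum_x T u x * W x b) ->
  capacity V <= capacity W.
Proof.
move=> hW T0 T1 VT; apply: (cap_le a0) => mu hm.
apply: le_trans (cap_ub (mu := fun x => \sum_u mu u * T u x) hW _).
  rewrite !MI_MIn ler_pM2r ?invr_gt0 ?ln2_gt0 //; exact: DP.
case: hm => m0 m1; split.
  by move=> x; apply: sumr_ge0 => u _; exact: mulr_ge0.
rewrite exchange_big /= -m1; apply: eq_bigr => u _; by rewrite -mulr_sumr T1 mulr1.
Qed.

Lemma cap_sub (A A' B : finType) (a0 : A) (W : A -> B -> R) (V : A' -> B -> R) (f : A -> A') :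
  is_channel V -> (forall x b, W x b = V (f x) b) -> capacity W <= capacity V.
Proof.
move=> hV e; apply: (cap_DP a0 (T := fun x u => if u == f x then 1 else 0)) => //.
- by move=> x u; case: eqP.
- by move=> x; rewrite -big_mkcond /= big_pred1_eq.
- move=> x b; rewrite e (bigD1 (f x)) //= eqxx mul1r big1 ?addr0 // => u /negbTE ->.
  by rewrite mul0r.
Qed.

Lemma MIn_convex (A B : finType) (mu : A -> R) (W1 W2 : A -> B -> R) (t : R) :
  is_channel W1 -> is_channel W2 -> 0 <= t <= 1 -> is_dist mu ->
  MIn mu (fun a b => t * W1 a b + (1 - t) * W2 a b) <= t * MIn mu W1 + (1 - t) * MIn mu W2.
Proof.
move=> [W10 _] [W20 _] /andP [t0 t1] [m0 _].
have t0' : 0 <= 1 - t by lra.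
have qe : forall b, outdist mu (fun a b => t * W1 a b + (1 - t) * W2 a b) b =
   t * outdist mu W1 b + (1 - t) * outdist mu W2 b.
  move=> b; rewrite /outdist !mulr_sumr -big_split; apply: eq_bigr => a _ /=.
  by rewrite mulrDr !mulrA (mulrC t) (mulrC (1 - t)).
rewrite /MIn !mulr_sumr -big_split; apply: ler_sum => a _ /=.
rewrite !mulr_sumr -big_split; apply: ler_sum => b _ /=.
rewrite qe -phiZ ?m0 // mulrDr mulrDr.
have h1 := outdist_ge a b m0 W10; have h2 := outdist_ge a b m0 W20.
set q1 := outdist mu W1 b in h1 *; set q2 := outdist mu W2 b in h2 *.
apply: le_trans (logsum2 _ _ _ _ _ _) _.
- by rewrite mulr_ge0 // mulr_ge0.
- by rewrite mulr_ge0 // mulr_ge0.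
- by rewrite mulr_ge0 // mulr_ge0 // (le_trans _ h1) // mulr_ge0.
- by rewrite mulr_ge0 // mulr_ge0 // (le_trans _ h2) // mulr_ge0.
- move=> hp; have [hm hw] := prod_pos (m0 a) (mulr_ge0 t0 (W10 a b)) hp.
  have [ht hw'] := prod_pos t0 (W10 a b) hw.
  by rewrite !mulr_gt0 // (lt_le_trans _ h1) // mulr_gt0.
- move=> hp; have [hm hw] := prod_pos (m0 a) (mulr_ge0 t0' (W20 a b)) hp.
  have [ht hw'] := prod_pos t0' (W20 a b) hw.
  by rewrite !mulr_gt0 // (lt_le_trans _ h2) // mulr_gt0.
rewrite !(mulrCA (mu a)) !phiZ // !phiZ //.
Qed.

Lemma cap_convex (A B : finType) (a0 : A) (W1 W2 : A -> B -> R) (t : R) :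
  is_channel W1 -> is_channel W2 -> 0 <= t <= 1 ->
  capacity (fun a b => t * W1 a b + (1 - t) * W2 a b) <= t * capacity W1 + (1 - t) * capacity W2.
Proof.
move=> h1 h2 ht; apply: (cap_le a0) => mu hm.
have /andP [t0 t1] := ht.
apply: (@le_trans _ _ (t * MI mu W1 + (1 - t) * MI mu W2)).
  rewrite !MI_MIn !mulrA -mulrDl ler_pM2r ?invr_gt0 ?ln2_gt0 //; exact: MIn_convex.
apply: lerD; apply: ler_wpM2l; rewrite ?subr_ge0 //; exact: cap_ub.
Qed.

Lemma cap_outperm (A B : finType) (W : A -> B -> R) (s : B -> B) :
  injective s -> capacity (fun a b => W a (s b)) = capacity W.
Proof.
move=> si.
have e : forall mu, MI mu (fun a b => W a (s b)) = MI mu W.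
  move=> mu; rewrite !MI_MIn; congr (_ / _); rewrite /MIn; apply: eq_bigr => a _.
  rewrite [RHS](reindex_inj si) /=; apply: eq_bigr => b _; done.
rewrite /capacity; congr sup; apply: funext => x; apply: propext.
by split => -[mu [hm ->]]; exists mu; rewrite e.
Qed.

End MIsec.


Definition y0 : 'I_2 := ord0.
Definition y1 : 'I_2 := ord_max.

Lemma I2_cases (b : 'I_2) : b = y0 \/ b = y1.
Proof. by case: b => [[|[|]]] //= h; [left|right]; apply: val_inj. Qed.

Lemma y1_neq0 : (y1 == y0) = false. Proof. by []. Qed.

Definition sw (i : 'I_2) : 'I_2 := if i == y0 then y1 else y0.
Lemma swK : involutive sw.
Proof. by move=> i; case: (I2_cases i) => ->. Qed.
Lemma sw_inj : injective sw.
Proof. exact: inv_inj swK. Qed.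

Section Bin.
Variable R : realType.

Lemma sum_I2 (F : 'I_2 -> R) : \sum_i F i = F y0 + F y1.
Proof. by rewrite !big_ord_recl big_ord0 addr0; congr (_ + F _); apply: val_inj. Qed.

Lemma row_y1 (A : finType) (W : A -> 'I_2 -> R) x : is_channel W -> W x y1 = 1 - W x y0.
Proof. move=> [_ h]; have := h x; rewrite sum_I2; lra. Qed.

Definition bin (al be : R) : 'I_2 -> 'I_2 -> R :=
  fun i j => let r := (if i == y0 then al else be) in if j == y0 then r else 1 - r.

Lemma bin00 al be : bin al be y0 y0 = al. Proof. by []. Qed.
Lemma bin01 al be : bin al be y0 y1 = 1 - al. Proof. by []. Qed.
Lemma bin10 al be : bin al be y1 y0 = be. Proof. by []. Qed.
Lemma bin11 al be : bin al be y1 y1 = 1 - be. Proof. by []. Qed.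

Lemma bin_channel al be : 0 <= al <= 1 -> 0 <= be <= 1 -> is_channel (bin al be).
Proof.
move=> /andP [a0 a1] /andP [b0 b1]; split.
  move=> i j; case: (I2_cases i) => ->; case: (I2_cases j) => ->;
  rewrite ?bin00 ?bin01 ?bin10 ?bin11 ?subr_ge0 //.
by move=> i; rewrite sum_I2; case: (I2_cases i) => ->;
  rewrite ?bin00 ?bin01 ?bin10 ?bin11 addrC subrK.
Qed.

Lemma zchan_bin (p : R) : (fun i j => zchan p i j) = bin 1 p.
Proof.
apply: funext => i; apply: funext => j; rewrite /zchan mxE.
have e0 : (nat_of_ord y0 == 0%N) = true by [].
have e1 : (nat_of_ord y1 == 0%N) = false by [].
case: (I2_cases i) => ->; case: (I2_cases j) => ->;
  by rewrite ?e0 ?e1 ?bin00 ?bin01 ?bin10 ?bin11 ?subrr.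
Qed.

Lemma cap_inswap (W : 'I_2 -> 'I_2 -> R) : is_channel W ->
  capacity (fun i j => W (sw i) j) = capacity W.
Proof.
move=> hW; have hW' : is_channel (fun i j => W (sw i) j).
  by case: hW => h1 h2; split => // i; exact: h2.
apply/eqP; rewrite eq_le; apply/andP; split.
  exact: (cap_sub y0 (f := sw)).
by apply: (cap_sub y0 (f := sw)) => // x b; rewrite swK.
Qed.

Lemma cap_bin_sym al be : 0 <= al <= 1 -> 0 <= be <= 1 ->
  capacity (bin (1 - be) (1 - al)) = capacity (bin al be).
Proof.
move=> ha hb.
have -> : bin (1 - be) (1 - al) = fun i j => bin al be (sw i) (sw j).
  apply: funext => i; apply: funext => j.
  have s0 : sw y0 = y1 by []. have s1 : sw y1 = y0 by [].
  case: (I2_cases i) => ->; case: (I2_cases j) => ->;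
     rewrite ?s0 ?s1 ?bin00 ?bin01 ?bin10 ?bin11; lra.
rewrite (cap_outperm (fun i j => bin al be (sw i) j) sw_inj).
apply: cap_inswap; exact: bin_channel.
Qed.

Lemma sum_ifmul (A : finType) (c : A) (a : R) (F : A -> R) :
  \sum_x (if x == c then a else 0) * F x = a * F c.
Proof. by rewrite (bigD1 c) //= eqxx big1 ?addr0 // => x /negbTE ->; rewrite mul0r. Qed.

Lemma sum_if (A : finType) (c : A) (a : R) :
  \sum_x (if x == c then a else 0) = a.
Proof. by rewrite (bigD1 c) //= eqxx big1 ?addr0 // => x /negbTE ->. Qed.

Lemma cap_DP2 (A A' : finType) (a0 : A') (W : A -> 'I_2 -> R) (V : A' -> 'I_2 -> R) x1 x2 :
  is_channel W -> is_channel V ->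
  (forall u, W x2 y0 <= V u y0 <= W x1 y0) -> capacity V <= capacity W.
Proof.
move=> hW hV hb.
pose d := W x1 y0 - W x2 y0.
pose t u := (V u y0 - W x2 y0) / d.
have t01 : forall u, 0 <= t u <= 1.
  move=> u; have /andP [h1 h2] := hb u; rewrite /t.
  case: (eqVneq d 0) => [->|dn0]; first by rewrite invr0 mulr0 lexx ler01.
  have dp : 0 < d by rewrite lt_neqAle eq_sym dn0 /d subr_ge0 (le_trans h1 h2).
  apply/andP; split; first by apply: divr_ge0; [rewrite subr_ge0 | exact: ltW].
  rewrite ler_pdivrMr // mul1r /d; lra.
have tv : forall u, t u * W x1 y0 + (1 - t u) * W x2 y0 = V u y0.
  move=> u; have /andP [h1 h2] := hb u; rewrite /t.
  case: (eqVneq d 0) => [d0|dn0].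
    rewrite d0 invr0 mulr0 mul0r add0r subr0 mul1r; apply/eqP; rewrite eq_le h1 /=.
    by move/eqP: d0; rewrite subr_eq0 => /eqP <-.
  have -> : (V u y0 - W x2 y0) / d * W x1 y0 + (1 - (V u y0 - W x2 y0) / d) * W x2 y0
    = W x2 y0 + (V u y0 - W x2 y0) / d * d by rewrite /d; ring.
  by rewrite divfK // addrC subrK.
apply: (cap_DP a0 (T := fun u x => (if x == x1 then t u else 0) + (if x == x2 then 1 - t u else 0))) => //.
- move=> u x; have /andP [h1 h2] := t01 u.
  by apply: addr_ge0; [case: eqP|case: eqP => _ //; rewrite subr_ge0].
- by move=> u; rewrite big_split /= !sum_if addrC subrK.
- move=> u b.
  under eq_bigr => x _ do rewrite mulrDl.
  rewrite big_split /= !sum_ifmul.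
  case: (I2_cases b) => ->; first by rewrite tv.
  rewrite !(row_y1 _ hW) (row_y1 _ hV) -tv; ring.
Qed.

Lemma cap_bin_mono (p q : R) : 0 <= p -> p <= q -> q <= 1 ->
  capacity (bin 1 q) <= capacity (bin 1 p).
Proof.
move=> p0 pq q1.
apply: (cap_DP2 y0 (x1 := y0) (x2 := y1)).
- apply: bin_channel => //; apply/andP; split => //; exact: le_trans q1.
- apply: bin_channel => //; apply/andP; split => //; exact: le_trans pq.
- by move=> u; case: (I2_cases u) => ->; rewrite !bin00 ?bin10 ?lexx ?pq ?q1 ?(le_trans pq q1).
Qed.

Lemma cap_bin_upper (al be : R) : 0 <= be -> be <= al -> al <= 1 ->
  capacity (bin al be) <= capacity (bin 1 (1 - al + be)).
Proof.
move=> b0 ba a1.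
set s := 1 - al + be.
case: (eqVneq s 0) => [s0|sn0].
  have -> : al = 1 by rewrite /s in s0; lra.
  have -> : be = 0 by rewrite /s in s0; lra.
  by rewrite s0.
have sp : 0 < s by rewrite lt_neqAle eq_sym sn0 /s; lra.
set th := be / s.
have th0 : 0 <= th <= 1.
  by apply/andP; split; [rewrite divr_ge0 // ltW | rewrite ler_pdivrMr // mul1r /s; lra].
have ths : th * s = be by rewrite /th divfK.
have s1 : s <= 1 by rewrite /s; lra.
have -> : bin al be = fun i j => th * bin 1 s i j + (1 - th) * bin (1 - s) 0 i j.
  apply: funext => i; apply: funext => j.
  case: (I2_cases i) => ->; case: (I2_cases j) => ->;
    rewrite ?bin00 ?bin01 ?bin10 ?bin11; rewrite /s in ths *; nra.
have ch1 : is_channel (bin 1 s).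
  apply: bin_channel; apply/andP; split; rewrite ?ler01 ?lexx ?(ltW sp) //.
have ch2 : is_channel (bin (1 - s) 0).
  apply: bin_channel; apply/andP; split; rewrite ?lexx ?ler01 //; lra.
apply: le_trans (cap_convex y0 ch1 ch2 th0) _.
have -> : capacity (bin (1 - s) 0) = capacity (bin 1 s).
  rewrite -[in X in bin _ X](subrr (1 : R)) cap_bin_sym //; apply/andP; split; rewrite ?ler01 ?lexx ?(ltW sp) //.
lra.
Qed.

Lemma cap_bin_cont_pos (p q : R) : 0 < p -> p <= q -> q <= 1 ->
  capacity (bin 1 p) <= (p / q) * capacity (bin 1 q) + (1 - p / q) * capacity (bin 1 0).
Proof.
move=> p0 pq q1.
have q0 : 0 < q by apply: lt_le_trans pq.
have th0 : 0 <= p / q <= 1.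
  by apply/andP; split; [rewrite divr_ge0 // ltW | rewrite ler_pdivrMr // mul1r].
have thq : p / q * q = p by rewrite divfK // lt0r_neq0.
have -> : bin 1 p = fun i j => (p / q) * bin 1 q i j + (1 - p / q) * bin 1 0 i j.
  apply: funext => i; apply: funext => j.
  case: (I2_cases i) => ->; case: (I2_cases j) => ->;
    rewrite ?bin00 ?bin01 ?bin10 ?bin11; nra.
apply: (cap_convex y0); [apply: bin_channel|apply: bin_channel|done]; rewrite ?ler01 ?lexx ?(ltW q0) ?q1 //.
Qed.

Lemma MIn_bin (mu : 'I_2 -> R) (al be : R) :
  MIn mu (bin al be) =
  mu y0 * phi al (mu y0 * al + mu y1 * be) + mu y0 * phi (1 - al) (mu y0 * (1 - al) + mu y1 * (1 - be))
  + (mu y1 * phi be (mu y0 * al + mu y1 * be) + mu y1 * phi (1 - be) (mu y0 * (1 - al) + mu y1 * (1 - be))).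
Proof. by rewrite /MIn /outdist !sum_I2 !bin00 !bin01 !bin10 !bin11. Qed.

Lemma phi1 (c : R) : 0 < c -> phi 1 c = - ln c.
Proof. by move=> c0; rewrite /phi oner_eq0 mul1r div1r lnV // posrE. Qed.

Lemma ineq_i (a0 a1 q : R) : 0 <= a0 -> 0 <= a1 -> a0 + a1 = 1 -> 0 <= q -> q <= 1 ->
  a0 * phi 1 a0 - q <= a0 * phi 1 (a0 + a1 * q).
Proof.
move=> h0 h1 hs q0 q1.
case: (eqVneq a0 0) => [->|an0]; first by rewrite !mul0r; lra.
have ap : 0 < a0 by rewrite lt_neqAle eq_sym an0 h0.
set c := a0 + a1 * q.
have a1q : 0 <= a1 * q by rewrite mulr_ge0.
have cp : 0 < c by rewrite /c; lra.
rewrite !phi1 //.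
have h := ln_le_sub1 (divr_gt0 cp ap).
rewrite lnM ?posrE ?invr_gt0 // lnV ?posrE // in h.
have : a0 * (ln c + - ln a0) <= a0 * (c / a0 - 1) by rewrite ler_wpM2l.
have -> : a0 * (c / a0 - 1) = c - a0 by field; rewrite lt0r_neq0.
have : a1 * q <= q by rewrite -[X in _ <= X]mul1r ler_wpM2r //; lra.
rewrite /c; nra.
Qed.

Lemma xlnx_ge (q : R) : 0 < q -> - 2 * Num.sqrt q <= q * ln q.
Proof.
move=> qp.
set s := Num.sqrt q.
have sp : 0 < s by rewrite /s sqrtr_gt0.
have qs : q = s * s by rewrite -expr2 /s sqr_sqrtr // ltW.
have lq : ln q = ln s + ln s by rewrite qs lnM ?posrE.
have hs := ln_ge1V sp.
have : s * s * (1 - s^-1) <= s * s * ln s by rewrite ler_wpM2l // mulr_ge0 // ltW.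
have -> : s * s * (1 - s^-1) = s * s - s by field; rewrite lt0r_neq0.
rewrite lq qs; nra.
Qed.

Lemma ineq_ii (a0 a1 q : R) : 0 <= a0 -> 0 <= a1 -> a0 + a1 = 1 -> 0 <= q -> q <= 1 ->
  - 2 * Num.sqrt q <= a1 * phi q (a0 + a1 * q).
Proof.
move=> h0 h1 hs q0 q1.
have sq0 : 0 <= Num.sqrt q by apply: sqrtr_ge0.
case: (eqVneq q 0) => [->|qn0]; first by rewrite phi0l mulr0 sqrtr0; lra.
case: (eqVneq a1 0) => [->|an0]; first by rewrite mul0r; lra.
have qp : 0 < q by rewrite lt_neqAle eq_sym qn0 q0.
have ap : 0 < a1 by rewrite lt_neqAle eq_sym an0 h1.
set c := a0 + a1 * q.
have a1q : 0 < a1 * q by rewrite mulr_gt0.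
have a1q' : a1 * q <= a1 by rewrite -[X in _ <= X]mulr1 ler_wpM2l.
have cp : 0 < c by rewrite /c; lra.
have c1 : c <= 1 by rewrite /c; lra.
have lc : ln c <= 0 by have := ln_le_sub1 cp; lra.
have e : phi q c = q * ln q - q * ln c.
  by rewrite /phi (negbTE qn0) lnM ?posrE ?invr_gt0 // lnV ?posrE // mulrDr mulrN.
have qlc : q * ln c <= 0 by rewrite mulr_ge0_le0 // ltW.
have hx := xlnx_ge qp.
have hp : - 2 * Num.sqrt q <= phi q c by rewrite e; lra.
case: (lerP 0 (phi q c)) => hph.
  have : 0 <= a1 * phi q c by rewrite mulr_ge0.
  lra.
have : 0 <= (a1 - 1) * phi q c by apply: mulr_le0; [lra | exact: ltW].
rewrite mulrBl mul1r; lra.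
Qed.

Lemma ineq_iv (a1 q : R) : 0 <= a1 -> a1 <= 1 -> 0 <= q -> q <= 1 ->
  a1 * phi 1 a1 - q <= a1 * phi (1 - q) (a1 * (1 - q)).
Proof.
move=> h0 h1 q0 q1.
case: (eqVneq a1 0) => [->|an0]; first by rewrite !mul0r; lra.
have ap : 0 < a1 by rewrite lt_neqAle eq_sym an0 h0.
rewrite phi1 //.
have h := ln_ge1V ap.
have : a1 * (1 - a1^-1) <= a1 * ln a1 by rewrite ler_wpM2l // ltW.
have -> : a1 * (1 - a1^-1) = a1 - 1 by field; rewrite lt0r_neq0.
set L := a1 * ln a1 => hL.
case: (eqVneq q 1) => [->|qn1].
  rewrite subrr phi0l mulr0 mulrN -/L; lra.
have qp : 0 < 1 - q by rewrite subr_gt0 lt_neqAle qn1 q1.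
have e : phi (1 - q) (a1 * (1 - q)) = - (1 - q) * ln a1.
  rewrite /phi (negbTE (lt0r_neq0 qp)).
  have -> : (1 - q) / (a1 * (1 - q)) = a1^-1 by field; rewrite !lt0r_neq0.
  by rewrite lnV ?posrE // mulrN mulNr.
rewrite e.
have -> : a1 * (- (1 - q) * ln a1) = - L + q * L by rewrite /L; ring.
have : 0 <= q * (L + 1) by rewrite mulr_ge0 //; lra.
move=> hq; rewrite mulrN -/L; rewrite mulrDr mulr1 in hq; lra.
Qed.

Lemma cap_bin_cont0 (q : R) : 0 <= q -> q <= 1 ->
  capacity (bin 1 0) <= capacity (bin 1 q) + (2 * q + 2 * Num.sqrt q) / ln 2.
Proof.
move=> q0 q1.
have chq : is_channel (bin 1 q) by apply: bin_channel; rewrite ?ler01 ?lexx ?q0 ?q1.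
apply: (cap_le y0) => mu hm.
have hm' := hm; case: hm' => m0 m1; rewrite sum_I2 in m1.
apply: (@le_trans _ _ (MI mu (bin 1 q) + (2 * q + 2 * Num.sqrt q) / ln 2)); last first.
  by rewrite lerD2r; apply: cap_ub.
rewrite !MI_MIn -mulrDl ler_pM2r ?invr_gt0 ?ln2_gt0 // !MIn_bin.
rewrite !subrr !subr0 !mulr0 !mulr1 !addr0 !add0r !phi0l !mulr0 !addr0 !add0r.
have a0 := m0 y0; have a1 := m0 y1.
have h1 := ineq_i a0 a1 m1 q0 q1.
have h2 := ineq_ii a0 a1 m1 q0 q1.
have h4 := ineq_iv a1 (_ : mu y1 <= 1) q0 q1.
have a11 : mu y1 <= 1 by lra.
have {}h4 := h4 a11.
lra.
Qed.

Lemma cap_bin0_bound : capacity (bin 1 0) <= 2 / ln (2 : R).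
Proof.
have ch : is_channel (bin (1:R) 0) by apply: bin_channel; rewrite ?ler01 ?lexx.
apply: (cap_le y0) => mu hm.
rewrite MI_MIn ler_pM2r ?invr_gt0 ?ln2_gt0 //.
by have := MIn_bound ch hm; rewrite card_ord.
Qed.

End Bin.


Section Det.
Context {R : realType} {m : nat} (hm : (2 <= m)%N).

Definition i0 : 'I_m := Ordinal (leq_trans (isT : 0 < 2)%N hm).
Definition i1 : 'I_m := Ordinal hm.
Lemma i10 : i1 != i0. Proof. by []. Qed.

Local Notation DT := {ffun 'I_m -> 'I_2}.
Definition c0 : DT := [ffun _ => y0].
Definition c1 : DT := [ffun _ => y1].

Lemma c10 : c1 != c0.
Proof. by apply/eqP => /ffunP /(_ i0); rewrite !ffunE. Qed.

Lemma detch_sum (D : DT) x : \sum_y detch R D x y = 1.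
Proof.
rewrite sum_I2 /detch; case: (I2_cases (D x)) => ->;
  by rewrite ?eqxx ?(eq_sym y0 y1) ?y1_neq0 ?addr0 ?add0r.
Qed.

Lemma detch_ge0 (D : DT) x y : 0 <= detch R D x y.
Proof. by rewrite /detch; case: eqP. Qed.

Lemma detch_le1 (D : DT) x y : detch R D x y <= 1.
Proof. by rewrite /detch; case: eqP. Qed.

Lemma nonconst (D : DT) : D != c0 -> D != c1 ->
  (exists x, D x = y0) /\ (exists x, D x = y1).
Proof.
move=> n0 n1; split.
  suff /existsP [x /eqP h] : [exists x, D x == y0] by exists x.
  apply: contraT => /existsPn h; suff : D == c1 by rewrite (negbTE n1).
  apply/eqP; apply/ffunP => x; rewrite ffunE.
  by case: (I2_cases (D x)) => // e; move: (h x); rewrite e eqxx.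
suff /existsP [x /eqP h] : [exists x, D x == y1] by exists x.
apply: contraT => /existsPn h; suff : D == c0 by rewrite (negbTE n0).
apply/eqP; apply/ffunP => x; rewrite ffunE.
by case: (I2_cases (D x)) => // e; move: (h x); rewrite e eqxx.
Qed.

Lemma rank_const (D : DT) y : (forall x, D x = y) -> detrank R D = 1%N.
Proof.
move=> hD.
pose r : 'rV[R]_2 := \row_j (if y == j then 1 else 0).
have e : (\matrix_(i < m, j < 2) detch R D i j) = (const_mx 1 : 'cV[R]_m) *m r.
  apply/matrixP => i j; rewrite !mxE big_ord1 !mxE mul1r /detch hD //.
apply/eqP; rewrite eqn_leq; apply/andP; split.
  by rewrite /detrank e (leq_trans (mxrankM_maxr _ _)) // rank_leq_row.
rewrite lt0n /detrank mxrank_eq0; apply/eqP => /matrixP /(_ i0 y).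
by rewrite !mxE /detch hD eqxx => /eqP; rewrite oner_eq0.
Qed.

Lemma rank_nonconst (D : DT) : D != c0 -> D != c1 -> (2 <= detrank R D)%N.
Proof.
move=> n0 n1; have [[x0 h0] [x1 h1]] := nonconst n0 n1.
rewrite -{1}(mxrank1 R 2) /detrank; apply: mxrankS; apply/row_subP => k.
have -> : row k (1%:M : 'M[R]_2) = row (if k == y0 then x0 else x1) (\matrix_(i < m, j < 2) detch R D i j).
  apply/rowP => j; rewrite !mxE /detch.
  case: (I2_cases k) => ->; rewrite ?eqxx ?y1_neq0 ?h0 ?h1; by case: eqP.
exact: row_sub.
Qed.

Lemma rank1E (D : DT) : (detrank R D == 1%N) = (D == c0) || (D == c1).
Proof.
case: (eqVneq D c0) => [->|n0] /=; first by rewrite (@rank_const c0 y0) // => x; rewrite ffunE.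
case: (eqVneq D c1) => [->|n1] /=; first by rewrite (@rank_const c1 y1) // => x; rewrite ffunE.
by have := rank_nonconst n0 n1; case: (detrank R D) => [|[|]].
Qed.

Lemma sum_rank1 (lam : DT -> R) :
  \sum_(D | detrank R D == 1%N) lam D = lam c0 + lam c1.
Proof.
rewrite (eq_bigl (fun D => (D == c0) || (D == c1))); last by move=> D; rewrite rank1E.
rewrite (bigD1 c0) ?eqxx //= (bigD1 c1) /=; last by rewrite eqxx orbT c10.
rewrite big1 ?addr0 // => D /andP [/andP [/orP [] -> //]].
Qed.

Lemma lam_le1 (lam : DT -> R) : is_dist lam -> lam c0 + lam c1 <= 1.
Proof.
move=> [l0 l1]; rewrite -l1 (bigD1 c0) //= (bigD1 c1) /=; last by rewrite c10.
by rewrite addrA lerDl; apply: sumr_ge0.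
Qed.

Lemma Vlam_channel (lam : DT -> R) : is_dist lam -> is_channel (Vlam lam).
Proof.
move=> [l0 l1]; split.
  by move=> u y; apply: sumr_ge0 => D _; rewrite mulr_ge0 ?detch_ge0.
move=> u; rewrite /Vlam exchange_big /= -l1; apply: eq_bigr => D _.
by rewrite -mulr_sumr detch_sum mulr1.
Qed.

Lemma Vlam_y0_ge (lam : DT -> R) u : is_dist lam -> lam c0 <= Vlam lam u y0.
Proof.
move=> [l0 l1]; have e : detch R c0 (u c0) y0 = 1 by rewrite /detch ffunE eqxx.
rewrite /Vlam (bigD1 c0) //= e mulr1 lerDl.
by apply: sumr_ge0 => D _; rewrite mulr_ge0 ?detch_ge0.
Qed.

Lemma Vlam_y1_ge (lam : DT -> R) u : is_dist lam -> lam c1 <= Vlam lam u y1.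
Proof.
move=> [l0 l1]; have e : detch R c1 (u c1) y1 = 1 by rewrite /detch ffunE eqxx.
rewrite /Vlam (bigD1 c1) //= e mulr1 lerDl.
by apply: sumr_ge0 => D _; rewrite mulr_ge0 ?detch_ge0.
Qed.

Definition ucst (x : 'I_m) : {ffun DT -> 'I_m} := [ffun _ => x].

Lemma C10_upper (lam : DT -> R) : is_dist lam ->
  C10 lam <= capacity (bin 1 (lam c0 + lam c1)).
Proof.
move=> hl; have hl' := hl; case: hl' => l0 l1.
have hs := lam_le1 hl.
have hV := Vlam_channel hl.
have a0 := l0 c0; have a1 := l0 c1.
apply: (@le_trans _ _ (capacity (bin (1 - lam c1) (lam c0)))).
  apply: (cap_DP2 (ucst i0) (x1 := y0) (x2 := y1)) => //.
    by apply: bin_channel; apply/andP; split; lra.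
  move=> u; rewrite bin00 bin10 Vlam_y0_ge //=.
  have := Vlam_y1_ge u hl; rewrite (row_y1 _ hV); lra.
apply: le_trans (cap_bin_upper _ _ _) _; try lra.
by have -> : 1 - (1 - lam c1) + lam c0 = lam c0 + lam c1 by ring.
Qed.


Lemma yneq : y0 <> y1. Proof. by move/(congr1 val). Qed.

Definition ee : DT := [ffun x => if x == i0 then y1 else y0].
Definition eb : DT := [ffun x => if x == i0 then y0 else y1].

Lemma neq_at (D1 D2 : DT) x : D1 x != D2 x -> (D1 == D2) = false.
Proof. by move=> h; apply/negbTE; apply: contra h => /eqP ->. Qed.

Lemma y01 : (y0 == y1) = false. Proof. by []. Qed.

Lemma c0e : (c0 == ee) = false. Proof. by apply: (neq_at (x := i0)); rewrite !ffunE eqxx. Qed.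
Lemma c0b : (c0 == eb) = false. Proof. by apply: (neq_at (x := i1)); rewrite !ffunE (negbTE i10). Qed.
Lemma c1e : (c1 == ee) = false. Proof. by apply: (neq_at (x := i1)); rewrite !ffunE (negbTE i10). Qed.
Lemma c1b : (c1 == eb) = false. Proof. by apply: (neq_at (x := i0)); rewrite !ffunE eqxx. Qed.
Lemma c01 : (c0 == c1) = false. Proof. by rewrite eq_sym (negbTE c10). Qed.

Lemma swap_lam (W : 'I_m -> 'I_2 -> R) (lam : DT -> R) : Lambda W lam ->
  exists lam', Lambda W lam' /\ (lam' c0 = 0 \/ lam' c1 = 0) /\
    lam' c0 + lam' c1 <= lam c0 + lam c1.
Proof.
move=> [[l0 l1] hW].
pose eps := if lam c0 <= lam c1 then lam c0 else lam c1.
have e0 : 0 <= eps by rewrite /eps; case: ifP.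
have e1 : eps <= lam c0 by rewrite /eps; case: ifP => // /negbT; rewrite -ltNge => /ltW.
have e2 : eps <= lam c1 by rewrite /eps; case: ifP.
pose lam' := fun D => lam D + (if D == ee then eps else 0) + (if D == eb then eps else 0)
   - ((if D == c0 then eps else 0) + (if D == c1 then eps else 0)).
have v0 : lam' c0 = lam c0 - eps by rewrite /lam' eqxx c0e c0b c01; ring.
have v1 : lam' c1 = lam c1 - eps by rewrite /lam' eqxx c1e c1b (eq_sym c1) c01; ring.
exists lam'; split; last split.
- split; first split.
  + move=> D; case: (eqVneq D c0) => [->|n0]; first by rewrite v0; lra.
    case: (eqVneq D c1) => [->|n1]; first by rewrite v1; lra.
    rewrite /lam' (negbTE n0) (negbTE n1); have := l0 D.
    by case: (D == ee); case: (D == eb) => /= h; lra.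
  + by rewrite /lam' sumrB !big_split /= !sum_if l1; ring.
  + move=> x y; rewrite hW.
    under [RHS]eq_bigr => D _ do rewrite /lam' mulrBl !mulrDl.
    rewrite sumrB !big_split /= !sum_ifmul.
    suff : detch R ee x y + detch R eb x y = detch R c0 x y + detch R c1 x y
      by move=> h; rewrite -mulrDr -h; ring.
    rewrite /detch !ffunE; case: (x == i0); case: (I2_cases y) => ->;
      by rewrite ?eqxx ?y01 ?y1_neq0 ?addr0 ?add0r.
- rewrite v0 v1 /eps; case: ifP => _; [left|right]; ring.
- rewrite v0 v1; lra.
Qed.

Definition u0 : {ffun DT -> 'I_m} := [ffun D : DT => if [pick x | D x == y0] is Some x then x else i0].
Definition u1 : {ffun DT -> 'I_m} := [ffun D : DT => if [pick x | D x == y1] is Some x then x else i0].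

Lemma detch_u0 (D : DT) : detch R D (u0 D) y0 = if D == c1 then 0 else 1.
Proof.
rewrite /detch /u0 ffunE; case: pickP => [x /eqP hx | hn].
  rewrite hx eqxx; case: eqP => // eD; move: hx; rewrite eD ffunE => /esym; move/yneq.
  by [].
have -> : D = c1.
  apply/ffunP => x; rewrite ffunE; case: (I2_cases (D x)) => // e.
  by move: (hn x); rewrite e eqxx.
by rewrite eqxx !ffunE y1_neq0.
Qed.

Lemma detch_u1 (D : DT) : detch R D (u1 D) y0 = if D == c0 then 1 else 0.
Proof.
rewrite /detch /u1 ffunE; case: pickP => [x /eqP hx | hn].
  rewrite hx y1_neq0; case: eqP => // eD; move: hx; rewrite eD ffunE; move/yneq.
  by [].
have -> : D = c0.
  apply/ffunP => x; rewrite ffunE; case: (I2_cases (D x)) => // e.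
  by move: (hn x); rewrite e eqxx.
by rewrite eqxx !ffunE eqxx.
Qed.

Lemma Vlam_u0 (lam : DT -> R) : is_dist lam -> Vlam lam u0 y0 = 1 - lam c1.
Proof.
move=> [_ l1]; rewrite /Vlam.
under eq_bigr => D _ do rewrite detch_u0.
rewrite -(sum_if c1 (lam c1)) -[X in X - _]l1 -sumrB; apply: eq_bigr => D _.
by case: eqP => [->|]; rewrite ?mulr0 ?mulr1 ?subrr ?subr0.
Qed.

Lemma Vlam_u1 (lam : DT -> R) : Vlam lam u1 y0 = lam c0.
Proof.
rewrite /Vlam.
under eq_bigr => D _ do rewrite detch_u1.
rewrite -(sum_if c0 (lam c0)); apply: eq_bigr => D _.
by case: eqP => [->|]; rewrite ?mulr0 ?mulr1.
Qed.

Lemma C10_lower (lam : DT -> R) : is_dist lam ->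
  capacity (bin (1 - lam c1) (lam c0)) <= C10 lam.
Proof.
move=> hl; have hV := Vlam_channel hl.
apply: (cap_sub y0 (f := fun i => if i == y0 then u0 else u1)) => // x b.
case: (I2_cases x) => ->; rewrite ?eqxx ?y1_neq0; case: (I2_cases b) => ->;
  rewrite ?bin00 ?bin01 ?bin10 ?bin11 ?(row_y1 _ hV) ?Vlam_u0 ?Vlam_u1 //; ring.
Qed.

Lemma C10_lower2 (lam : DT -> R) : is_dist lam -> (lam c0 = 0 \/ lam c1 = 0) ->
  capacity (bin 1 (lam c0 + lam c1)) <= C10 lam.
Proof.
move=> hl; have hl' := hl; case: hl' => l0 l1; have hs := lam_le1 hl.
move=> [h|h]; have := C10_lower hl; rewrite h.
  rewrite add0r.
  have e := @cap_bin_sym R 1 (lam c1).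
  rewrite subrr in e; rewrite e //; apply/andP; split; rewrite ?l0 ?ler01 ?lexx //; lra.
by rewrite subr0 addr0.
Qed.


Lemma lam_star (W : 'I_m -> 'I_2 -> R) : is_channel W ->
  exists lam, Lambda W lam /\ C10 lam <= capacity W.
Proof.
move=> hW; have hW' := hW; case: hW' => W0 W1.
have [xmin _ hmin] := @arg_minP _ _ _ i0 predT (fun x => W x y1) isT.
have [xmax _ hmax] := @arg_maxP _ _ _ i0 predT (fun x => W x y1) isT.
set a := W xmin y1 in hmin *; set b := W xmax y1 in hmax *.
have ha : forall x, a <= W x y1 by move=> x; exact: hmin.
have hb : forall x, W x y1 <= b by move=> x; exact: hmax.
have a0 : 0 <= a by apply: W0.
have ab : a <= b by apply: ha.
have b1 : b <= 1 by have := row_y1 xmax hW; have := W0 xmax y0; rewrite /b; lra.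
pose th x := (W x y1 - a) / (b - a).
have hth : forall x, 0 <= th x <= 1.
  move=> x; rewrite /th; case: (eqVneq (b - a) 0) => [->|dn0].
    by rewrite invr0 mulr0 lexx ler01.
  have dp : 0 < b - a by rewrite lt_neqAle eq_sym dn0 subr_ge0.
  apply/andP; split; first by apply: divr_ge0; [rewrite subr_ge0 | exact: ltW].
  rewrite ler_pdivrMr // mul1r; have := hb x; lra.
have thb : forall x, (b - a) * th x = W x y1 - a.
  move=> x; rewrite /th; case: (eqVneq (b - a) 0) => [d0|dn0].
    rewrite d0 mul0r; have := ha x; have := hb x; move/eqP: d0; rewrite subr_eq0 => /eqP; lra.
  by rewrite mulrC divfK.
pose F x (j : 'I_2) := if j == y1 then th x else 1 - th x.
have F0 : forall x j, 0 <= F x j.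
  by move=> x j; rewrite /F; have /andP [h1 h2] := hth x; case: ifP => _; lra.
have F1 : forall x, \sum_j F x j = 1 by move=> x; rewrite sum_I2 /F y01 eqxx; ring.
pose nu (D : DT) := \prod_x F x (D x).
have nu0 : forall D, 0 <= nu D by move=> D; apply: prodr_ge0 => x _.
have nu1 : \sum_D nu D = 1.
  rewrite /nu -bigA_distr_bigA /=; rewrite (eq_bigr (fun _ => 1)) ?big1_eq // => x _.
have nuD : forall x0 y, \sum_D nu D * detch R D x0 y = F x0 y.
  move=> x0 y.
  pose G x j := if x == x0 then F x j * (if j == y then 1 else 0) else F x j.
  have hG : \prod_x \sum_j G x j = F x0 y.
    have hr : \prod_(x | x != x0) \sum_j G x j = 1.
      by apply: big1 => x nx; rewrite /G (negbTE nx) F1.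
    rewrite (bigD1 x0) //= hr.
    rewrite mulr1 /G eqxx.
    under eq_bigr => j _ do rewrite mulrC.
    by rewrite sum_ifmul mul1r.
  rewrite -hG bigA_distr_bigA /=; apply: eq_bigr => D _.
  have hp : \prod_(x | x != x0) G x (D x) = \prod_(x | x != x0) F x (D x).
    by apply: eq_bigr => x /negbTE nx; rewrite /G nx.
  rewrite /nu (bigD1 x0) //= [RHS](bigD1 x0) //= hp /G eqxx /detch.
  ring.
pose lam (D : DT) := (if D == c1 then a else 0) + (if D == c0 then 1 - b else 0) + (b - a) * nu D.
have hl : Lambda W lam.
  split; first split.
  - move=> D; rewrite /lam; have := nu0 D.
    have : 0 <= (b - a) * nu D by rewrite mulr_ge0 // subr_ge0.
    by case: (D == c1); case: (D == c0) => /=; lra.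
  - by rewrite /lam !big_split /= !sum_if -mulr_sumr nu1; ring.
  - move=> x y; rewrite /lam.
    under eq_bigr => D _ do rewrite mulrDl mulrDl -mulrA.
    rewrite !big_split /= !sum_ifmul -mulr_sumr nuD /detch !ffunE /F.
    have := thb x; have := row_y1 x hW.
    by case: (I2_cases y) => ->; rewrite ?eqxx ?y01 ?y1_neq0 => h1 h2; lra.
exists lam; split => //.
have hd : is_dist lam by case: hl.
have hV := Vlam_channel hd.
apply: (cap_DP2 (ucst i0) (x1 := xmin) (x2 := xmax)) => // u.
have e : Vlam lam u y1 = a + (b - a) * \sum_D nu D * detch R D (u D) y1.
  rewrite /Vlam /lam.
  under eq_bigr => D _ do rewrite mulrDl mulrDl -mulrA.
  rewrite !big_split /= !sum_ifmul -mulr_sumr /detch !ffunE eqxx y01; ring.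
have S0 : 0 <= \sum_D nu D * detch R D (u D) y1.
  by apply: sumr_ge0 => D _; rewrite mulr_ge0 ?detch_ge0.
have S1 : \sum_D nu D * detch R D (u D) y1 <= 1.
  rewrite -nu1; apply: ler_sum => D _.
  by rewrite -[X in _ <= X]mulr1 ler_wpM2l ?detch_le1.
have : (b - a) * \sum_D nu D * detch R D (u D) y1 <= b - a.
  by rewrite -[X in _ <= X]mulr1 ler_wpM2l // subr_ge0.
have : 0 <= (b - a) * \sum_D nu D * detch R D (u D) y1 by rewrite mulr_ge0 // subr_ge0.
have r1 := row_y1 u hV; have r2 := row_y1 xmin hW; have r3 := row_y1 xmax hW.
rewrite e in r1; rewrite -/a in r2; rewrite -/b in r3.
move=> h1 h2; apply/andP; split; lra.
Qed.

End Det.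


Section Cont.
Context {R : realType}.

Lemma bin1_channel (q : R) : 0 <= q -> q <= 1 -> is_channel (bin 1 q).
Proof. by move=> q0 q1; apply: bin_channel; rewrite ?ler01 ?lexx ?q0 ?q1. Qed.

Lemma cont_lemma (P x : R) : 0 <= P -> P <= 1 -> x < capacity (bin 1 P) ->
  exists2 d, 0 < d & forall q, P <= q -> q < P + d -> q <= 1 -> x < capacity (bin 1 q).
Proof.
move=> P0 P1 hx.
have l2 := @ln2_gt0 R.
case: (eqVneq P 0) => [Pe|Pn0].
  rewrite Pe in hx.
  set g := capacity (bin (1:R) 0) - x.
  have gp : 0 < g by rewrite /g subr_gt0.
  set c := g * ln 2 / 4.
  have cp : 0 < c by rewrite /c divr_gt0 // mulr_gt0.
  exists (c * c); first by rewrite mulr_gt0.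
  move=> q Pq qd q1; rewrite Pe in Pq qd; rewrite add0r in qd.
  have h := cap_bin_cont0 Pq q1.
  set s := Num.sqrt q in h.
  have s0 : 0 <= s by apply: sqrtr_ge0.
  have ss : s * s = q by rewrite -expr2 sqr_sqrtr.
  have s1 : s <= 1.
    rewrite leNgt; apply/negP => hs.
    have : 1 * 1 < s * s by apply: ltr_pM => //; lra.
    lra.
  have qs : q <= s by rewrite -ss -[X in _ <= X]mulr1 ler_wpM2l.
  have sc : s < c.
    rewrite ltNge; apply/negP => hs.
    have : c * c <= s * s by apply: ler_pM => //; lra.
    lra.
  have : (2 * q + 2 * s) / ln 2 < g.
    rewrite ltr_pdivrMr //.
    have : c * 4 = g * ln 2 by rewrite /c; field.
    lra.
  rewrite /g in h *; lra.
have Pp : 0 < P by rewrite lt_neqAle eq_sym Pn0 P0.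
set K := 2 / ln (2 : R).
have hK := @cap_bin0_bound R.
have hC0 : capacity (bin 1 P) <= capacity (bin (1:R) 0) by apply: cap_bin_mono; rewrite ?lexx.
set CP := capacity (bin 1 P) in hx hC0 *.
set C0 := capacity (bin (1:R) 0) in hK hC0 *.
set g := CP - x.
have gp : 0 < g by rewrite /g subr_gt0.
have Kx : 0 < K - x by rewrite subr_gt0 /K; lra.
exists (P * g / (K - x)); first by rewrite divr_gt0 // mulr_gt0.
move=> q Pq qd q1.
rewrite ltNge; apply/negP => hq.
have qp : 0 < q by apply: lt_le_trans Pq.
have h := cap_bin_cont_pos Pp Pq q1.
set th := P / q in h.
have th0 : 0 <= th by rewrite divr_ge0 // ltW.
have th1 : th <= 1 by rewrite ler_pdivrMr // mul1r.
have thq : th * q = P by rewrite /th divfK // lt0r_neq0.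
fold CP C0 in h.
set Cq := capacity (bin 1 q) in h hq.
have h1 : th * Cq <= th * x by rewrite ler_wpM2l.
have h2 : (1 - th) * C0 <= (1 - th) * K by rewrite ler_wpM2l // subr_ge0.
have h3 : 0 <= q * ((1 - th) * (1 - th)) by apply: mulr_ge0; [lra | apply: mulr_ge0; lra].
have h4 : (1 - th) * P <= q - P.
  have : q * ((1 - th) * (1 - th)) = q - P - (1 - th) * P.
    by rewrite -thq; ring.
  lra.
have h5 : (q - P) * (K - x) < P * g.
  have : q - P < P * g / (K - x) by lra.
  by rewrite ltr_pdivlMr.
have h6 : P * ((1 - th) * (K - x)) < P * g.
  apply: le_lt_trans h5.
  rewrite mulrA (mulrC P) ler_wpM2r // ltW //.
have h7 : (1 - th) * (K - x) < g by rewrite -(ltr_pM2l Pp).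
have : CP <= x + (1 - th) * (K - x).
  have -> : x + (1 - th) * (K - x) = th * x + (1 - th) * K by ring.
  lra.
rewrite /g in h7; lra.
Qed.

End Cont.

Local Open Scope classical_set_scope.
Local Open Scope ring_scope.


Section Main.
Context {R : realType} {m : nat} (hm : (2 <= m)%N).

Local Notation DT := {ffun 'I_m -> 'I_2}.

Lemma cap_le_C10 (W : 'I_m -> 'I_2 -> R) (lam : DT -> R) :
  Lambda W lam -> capacity W <= C10 lam.
Proof.
move=> [hd hW]; have hV := Vlam_channel hd.
apply: (cap_sub (i0 hm) (f := ucst)) => // x b.
rewrite hW /Vlam; apply: eq_bigr => D _; by rewrite /ucst ffunE.
Qed.

Lemma part1 (W : 'I_m -> 'I_2 -> R) : is_channel W -> lowC10 W = capacity W.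
Proof.
move=> hW; have [ls [hls hC]] := lam_star hm hW.
have lb : lbound [set x | exists lam, Lambda W lam /\ x = C10 lam] (capacity W).
  by move=> x [lam [hl ->]]; apply: cap_le_C10.
rewrite /lowC10; apply/eqP; rewrite eq_le; apply/andP; split.
  apply: le_trans hC; apply: ge_inf; first by exists (capacity W).
  by exists ls.
by apply: lb_le_inf => //; exists (C10 ls), ls.
Qed.

Lemma part2 (W : 'I_m -> 'I_2 -> R) : is_channel W -> upC10 W = capacity (bin 1 (lowP1 W)).
Proof.
move=> hW; have [ls [hls hC]] := lam_star hm hW.
set S := [set x | exists lam, Lambda W lam /\ x = \sum_(D : DT | detrank R D == 1%N) lam D].
have hlbS : lbound S 0.
  move=> x [lam [[[l0 _] _] ->]]; rewrite sum_rank1 //; exact: addr_ge0.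
have hinfS : has_inf S by split; [exists (\sum_(D : DT | detrank R D == 1%N) ls D), ls | exists 0].
have hPs : forall lam, Lambda W lam -> lowP1 W <= lam c0 + lam c1.
  move=> lam hl; rewrite -(sum_rank1 hm); apply: ge_inf; first by exists 0.
  by exists lam.
set P := lowP1 W in hPs *.
have P0 : 0 <= P by apply: lb_le_inf => //; exists (\sum_(D : DT | detrank R D == 1%N) ls D), ls.
have P1 : P <= 1 by apply: le_trans (hPs _ hls) _; apply: lam_le1; case: hls.
set E := [set x | exists lam, Lambda W lam /\ x = C10 lam].
have ub : ubound E (capacity (bin 1 P)).
  move=> x [lam [hl ->]]; apply: le_trans (C10_upper hm (proj1 hl)) _.
  apply: cap_bin_mono => //; first exact: hPs.
  by apply: lam_le1; case: hl.
have hE : (E !=set0)%classic by exists (C10 ls), ls.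
rewrite /upC10 -/E; apply/eqP; rewrite eq_le; apply/andP; split; first exact: ge_sup.
rewrite leNgt; apply/negP => hlt.
have [d dp hd] := cont_lemma P0 P1 hlt.
have [e [lam [hl ->]] he] := inf_adherent dp hinfS.
rewrite (sum_rank1 hm) in he.
have [lam' [hl' [hz hs']]] := swap_lam hm hl.
have hP' := hPs _ hl'.
have h1 := lam_le1 hm (proj1 hl').
have := hd (lam' c0 + lam' c1) hP'.
move=> /(_ _ h1) hq.
have hq' : lam' c0 + lam' c1 < P + d by apply: le_lt_trans hs' _.
have := hq hq'.
have h2 := C10_lower2 hm (proj1 hl') hz.
have h3 : C10 lam' <= sup E by apply: ub_le_sup; [exists (capacity (bin 1 P)) | exists lam'].
move=> h4; have := lt_le_trans h4 (le_trans h2 h3); rewrite ltxx.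
by [].
Qed.

End Main.

Unset Implicit Arguments.
Local Close Scope classical_set_scope.

Theorem theorem3 (R : realType) (m : nat) (hm : (2 <= m)%N)
  (W : 'M[R]_(m, 2)) (hW : is_channel (fun x y => W x y)) :
  lowC10 (fun x y => W x y) = capacity (fun x y => W x y) /\
  upC10 (fun x y => W x y) =
    capacity (fun i j => zchan (lowP1 (fun x y => W x y)) i j).
Proof.
split; first exact: part1.
rewrite zchan_bin; exact: part2.
Qed.
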